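(* (a) Let $R$ be a commutative ring and $\mathfrak{a}\subseteq R$ an idempotent ideal. Then every $R$-module is of bounded small $\mathfrak{a}$-torsion. However, there exist a commutative ring $R$, an idempotent ideal $\mathfrak{a}$ and an $R$-module that is not of bounded large $\mathfrak{a}$-torsion; and there exist a commutative ring $R$ and an idempotent ideal $\mathfrak{a}$ such that the $R$-module $R$ is not of strongly bounded small $\mathfrak{a}$-torsion. (b) Let $R$ be a commutative ring and $\mathfrak{a}\subseteq R$ an ideal generated by idempotent elements. Then every $R$-module is of strongly bounded large $\mathfrak{a}$-torsion.
   Context: $\Gamma_\mathfrak{a}(M)=\{x\in M\mid \exists n\in\mathbb{N}:\mathfrak{a}^n\subseteq(0:_Rx)\}$, $\overline{\Gamma}_\mathfrak{a}(M)=\{x\in M\mid \mathfrak{a}\subseteq\sqrt{(0:_Rx)}\}$. An $R$-module $M$ is of strongly bounded large (resp. small) $\mathfrak{a}$-torsion if there is $n\in\mathbb{N}$ with $\mathfrak{a}^nM\cap\overline{\Gamma}_\mathfrak{a}(M)=0$ (resp. $\mathfrak{a}^nM\cap\Gamma_\mathfrak{a}(M)=0$), and of bounded large (resp. small) $\mathfrak{a}$-torsion if there is $n\in\mathbb{N}$ with $\mathfrak{a}^n\overline{\Gamma}_\mathfrak{a}(M)=0$ (resp. $\mathfrak{a}^n\Gamma_\mathfrak{a}(M)=0$). Idempotent means $\mathfrak{a}^2=\mathfrak{a}$. *)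

(* Defs.v *)
(* Ideals and submodules are Prop-valued predicates
   (membership in ideals of arbitrary rings is not decidable). *)
From HB Require Import structures.
From mathcomp Require Import all_boot all_order all_algebra.
Set Implicit Arguments. Unset Strict Implicit. Unset Printing Implicit Defensive.
Import GRing.Theory.
Local Open Scope ring_scope.

Section Defs.
Variable R : comPzRingType.

Definition is_ideal (a : R -> Prop) : Prop :=
  a 0 /\ (forall x y, a x -> a y -> a (x + y)) /\ (forall r x, a x -> a (r * x)).

Inductive ideal_gen (S : R -> Prop) : R -> Prop :=
| ig0 : ideal_gen S 0
| igS s : S s -> ideal_gen S s
| igM r x : ideal_gen S x -> ideal_gen S (r * x)
| igD x y : ideal_gen S x -> ideal_gen S y -> ideal_gen S (x + y).

Inductive prod_ideal (I J : R -> Prop) : R -> Prop :=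
| pi0 : prod_ideal I J 0
| piM i j : I i -> J j -> prod_ideal I J (i * j)
| piD x y : prod_ideal I J x -> prod_ideal I J y -> prod_ideal I J (x + y).

Fixpoint ideal_pow (a : R -> Prop) (n : nat) : R -> Prop :=
  match n with
  | 0 => fun _ => True
  | n'.+1 => prod_ideal (ideal_pow a n') a
  end.

Definition ideal_eq (a b : R -> Prop) : Prop := forall r, a r <-> b r.

Definition idempotent_ideal (a : R -> Prop) : Prop := ideal_eq (ideal_pow a 2) a.

Definition generated_by_idempotents (a : R -> Prop) : Prop :=
  exists S : R -> Prop, (forall e, S e -> e * e = e) /\ ideal_eq a (ideal_gen S).

Variable M : lmodType R.

Inductive ideal_smul (a : R -> Prop) : M -> Prop :=
| is0 : ideal_smul a 0
| isZ r m : a r -> ideal_smul a (r *: m)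
| isD x y : ideal_smul a x -> ideal_smul a y -> ideal_smul a (x + y).

Definition annih (x : M) : R -> Prop := fun r => r *: x = 0.

Definition Gamma (a : R -> Prop) (x : M) : Prop :=
  exists n : nat, forall r, ideal_pow a n r -> annih x r.

Definition Gamma_bar (a : R -> Prop) (x : M) : Prop :=
  forall r, a r -> exists n : nat, annih x (r ^+ n).

Definition strongly_bounded_large (a : R -> Prop) : Prop :=
  exists n : nat, forall x, ideal_smul (ideal_pow a n) x -> Gamma_bar a x -> x = 0.

Definition strongly_bounded_small (a : R -> Prop) : Prop :=
  exists n : nat, forall x, ideal_smul (ideal_pow a n) x -> Gamma a x -> x = 0.

Definition bounded_large (a : R -> Prop) : Prop :=
  exists n : nat, forall r x, ideal_pow a n r -> Gamma_bar a x -> r *: x = 0.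

Definition bounded_small (a : R -> Prop) : Prop :=
  exists n : nat, forall r x, ideal_pow a n r -> Gamma a x -> r *: x = 0.

End Defs.

(* Main.v *)
Require Import Defs.
From HB Require Import structures.
From mathcomp Require Import all_boot all_order all_algebra.
From mathcomp.multinomials Require Import monalg.
From mathcomp Require Import ring lra.
Import Order.TTheory GRing.Theory Num.Theory.
Local Open Scope ring_scope.
Definition trunc (x : rat) : rat := if x <= 1 then x else 2.
Definition inK (x : rat) : bool := (0 <= x) && ((x <= 1) || (x == 2)).
Record KT := MkK { kval : rat; kP : inK kval }.
HB.instance Definition _ := [isSub for kval].
HB.instance Definition _ := [Choice of KT by <:].

Lemma trunc_inK x : 0 <= x -> inK (trunc x).
Proof. rewrite /trunc /inK => h; case: ifP => h1; rewrite ?h ?h1 //= ; lra. Qed.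

Lemma trunc_addl x c : 0 <= c -> 0 <= x -> trunc (trunc x + c) = trunc (x + c).
Proof.
rewrite /trunc => hc hx; case: (ifP (x <= 1)) => h1 //.
have -> : (2 + c <= 1) = false by apply/negbTE; rewrite -ltNge; lra.
have -> // : (x + c <= 1) = false.
apply/negbTE; rewrite -ltNge; move/negbT: h1; rewrite -ltNge; lra.
Qed.

Lemma kval_ge0 (p : KT) : 0 <= kval p.
Proof. by case: p => v /= /andP[]. Qed.

Lemma trunc_id (p : KT) : trunc (kval p) = kval p.
Proof. case: p => v /= /andP[_ /orP[h|/eqP hv]]; rewrite /trunc ?h ?hv //. Qed.

Definition kmul (p q : KT) : KT :=
  @MkK _ (@trunc_inK (kval p + kval q) (addr_ge0 (kval_ge0 p) (kval_ge0 q))).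
Definition kone : KT := @MkK 0 (isT : inK 0).

Lemma kmulA : associative kmul.
Proof.
move=> a b c; apply: val_inj => /=.
rewrite trunc_addl ?kval_ge0 ?addr_ge0 ?kval_ge0 //.
rewrite [kval a + _]addrC trunc_addl ?kval_ge0 ?addr_ge0 ?kval_ge0 //.
congr trunc; rewrite /=; ring.
Qed.
Lemma kmulC : commutative kmul.
Proof. by move=> a b; apply: val_inj => /=; rewrite addrC. Qed.
Lemma kmul1 : left_id kone kmul.
Proof. by move=> a; apply: val_inj => /=; rewrite add0r trunc_id. Qed.
Lemma kmulr1 : right_id kone kmul.
Proof. by move=> a; rewrite kmulC kmul1. Qed.
Lemma kunit x y : kmul x y = kone -> x = kone /\ y = kone.
Proof.
move/(congr1 kval) => /=; rewrite /trunc.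
have hx := kval_ge0 x; have hy := kval_ge0 y.
case: ifP => h1 h.
  split; apply: val_inj => /=; lra.
exfalso; move: h; lra.
Qed.

HB.instance Definition _ := Choice_isMonomialDef.Build KT kmulA kmul1 kmulr1 kunit.
HB.instance Definition _ := MonomialDef_isConomialDef.Build KT kmulC.

Definition RR := {malg int[KT]}.
Definition RRc : comPzRingType := RR.
Section Gen.
Variable R : comPzRingType.
Implicit Types a I J : R -> Prop.

Lemma prod_in_ideal a I r : is_ideal a -> prod_ideal I a r -> a r.
Proof.
move=> [h0 [hD hM]]; elim=> [|i j _ hj|x y _ hx _ hy].
- exact: h0.
- exact: hM.
- exact: hD.
Qed.

Lemma prod_mono I J K r : (forall x, I x -> J x) -> prod_ideal I K r -> prod_ideal J K r.
Proof.
move=> h; elim=> [|i j hi hj|x y _ hx _ hy]; first exact: pi0.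
  by apply: piM => //; apply: h.
exact: piD.
Qed.

Lemma prod_mulr I J r x : (forall s i, I i -> I (s * i)) ->
  prod_ideal I J x -> prod_ideal I J (r * x).
Proof.
move=> h; elim=> [|i j hi hj|x1 y _ hx _ hy].
- by rewrite mulr0; apply: pi0.
- by rewrite mulrA; apply: piM => //; apply: h.
- by rewrite mulrDr; apply: piD.
Qed.

Lemma pow1_iff a r : is_ideal a -> (ideal_pow a 1 r <-> a r).
Proof.
move=> ha; split; first exact: prod_in_ideal.
by move=> h; rewrite -(mul1r r); apply: piM.
Qed.

Lemma pow_idem a n r : is_ideal a -> idempotent_ideal a ->
  (0 < n)%N -> (ideal_pow a n r <-> a r).
Proof.
move=> ha hi; elim: n r => // [[|n] IH] r _; first exact: pow1_iff.
split.
- move=> h; apply/(hi r); move: h => /=.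
  apply: prod_mono => x hx; apply/pow1_iff => //; exact/(IH x).
- move=> /(hi r) /= h; move: h; apply: prod_mono => x hx.
  by apply/(IH x) => //; apply/pow1_iff.
Qed.

Lemma part_a1 a : is_ideal a -> idempotent_ideal a ->
  forall M : lmodType R, bounded_small M a.
Proof.
move=> ha hi M; exists 1%N => r x hr [[|k] hk].
  by have := hk 1 I; rewrite /annih scale1r => ->; rewrite scaler0.
apply: hk; apply/(@pow_idem a k.+1 r ha hi isT); exact/(@pow1_iff a r ha).
Qed.

Lemma idem_gen (S : R -> Prop) r : (forall e, S e -> e * e = e) -> ideal_gen S r ->
  exists e, [/\ ideal_gen S e, e * e = e & e * r = r].
Proof.
move=> hS; elim=> [|s hs|s x _ [e [he1 he2 he3]]|x y _ [e1 [h1 h2 h3]] _ [e2 [g1 g2 g3]]].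
- by exists 0; split; [exact: ig0|rewrite mulr0|rewrite mulr0].
- by exists s; split; [exact: igS|exact: hS|exact: hS].
- by exists e; split => //; rewrite mulrCA he3.
- exists (e1 + e2 + (-1) * (e1 * e2)); split.
  + by apply: igD; [apply: igD|apply: igM; rewrite mulrC; apply: igM].
  + have E : e1 * e1 * e2 = e1 * e2 by rewrite h2.
    have E2 : e1 * (e2 * e2) = e1 * e2 by rewrite g2.
    transitivity (e1 * e1 + e2 * e2 + e1 * e2 * 2 - (e1 * e1 * e2 + e1 * (e2 * e2)) * 2
       + (e1 * e1) * (e2 * e2)); first ring.
    by rewrite E E2 h2 g2; ring.
  + transitivity ((e1 * x + e2 * x - e2 * (e1 * x)) + (e2 * y + e1 * y
      - e1 * (e2 * y))); first ring.
    by rewrite h3 g3; ring.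
Qed.


Lemma comb (S : R -> Prop) e1 e2 : ideal_gen S e1 -> ideal_gen S e2 ->
  e1 * e1 = e1 -> e2 * e2 = e2 ->
  exists e, [/\ ideal_gen S e, e * e = e, e * e1 = e1 & e * e2 = e2].
Proof.
move=> h1 g1 h2 g2; exists (e1 + e2 + (-1) * (e1 * e2)); split.
- by apply: igD; [apply: igD|apply: igM; rewrite mulrC; apply: igM].
- have E : e1 * e1 * e2 = e1 * e2 by rewrite h2.
  have E2 : e1 * (e2 * e2) = e1 * e2 by rewrite g2.
  transitivity (e1 * e1 + e2 * e2 + e1 * e2 * 2 - (e1 * e1 * e2 + e1 * (e2 * e2)) * 2
       + (e1 * e1) * (e2 * e2)); first ring.
  by rewrite E E2 h2 g2; ring.
- transitivity (e1 * e1 + e2 * e1 - (e1 * e1) * e2); first ring.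
  by rewrite h2; ring.
- transitivity (e1 * e2 + e2 * e2 - e1 * (e2 * e2)); first ring.
  by rewrite g2; ring.
Qed.

Lemma expr_idem (e : R) k : e * e = e -> e ^+ k.+1 = e.
Proof. by move=> he; elim: k => // k IH; rewrite exprS IH he. Qed.

Lemma part_b a : is_ideal a -> generated_by_idempotents a ->
  forall M : lmodType R, strongly_bounded_large M a.
Proof.
move=> ha [S [hS hSa]] M.
have key : forall x : M, ideal_smul (ideal_pow a 1) x ->
    exists e, [/\ ideal_gen S e, e * e = e & e *: x = x].
  move=> x; elim=> [|r m hr|x1 y _ [e1 [h1 h2 h3]] _ [e2 [g1 g2 g3]]].
  - by exists 0; split; [exact: ig0|rewrite mulr0|rewrite scaler0].
  - have /hSa hr' := (proj1 (@pow1_iff a r ha) hr).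
    have [e [he1 he2 he3]] := @idem_gen S r hS hr'.
    by exists e; split => //; rewrite scalerA he3.
  - have [e [k1 k2 k3 k4]] := @comb S e1 e2 h1 g1 h2 g2.
    exists e; split => //.
    by rewrite scalerDr -[in e *: x1]h3 -[in e *: y]g3 !scalerA k3 k4 h3 g3.
exists 1%N => x hx hbar.
have [e [he1 he2 he3]] := key x hx.
have /hbar [[|k] hk] : a e by apply/hSa.
  by move: hk; rewrite /annih expr0 scale1r.
by move: hk; rewrite /annih expr_idem // he3.
Qed.


Lemma nil_add (x y : R) m n : x ^+ m = 0 -> y ^+ n = 0 -> (x + y) ^+ (m + n) = 0.
Proof.
move=> hx hy; rewrite exprDn big1 // => i _.
case: (leqP n i) => h.
  by rewrite -(subnKC h) exprD hy mul0r mulr0 mul0rn.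
have h2 : (m <= m + n - i)%N by rewrite -addnBA ?leq_addr // ltnW.
by rewrite -(subnKC h2) exprD hx !mul0r mul0rn.
Qed.

End Gen.
Definition tt (q : KT) : RR := << q >>.
Definition kinf : KT := @MkK 2 isT.
Definition ee : RR := tt kinf.

Lemma tM p q : tt p * tt q = tt (kmul p q).
Proof. by rewrite /tt malgM_def fgmulUU mulr1. Qed.

Lemma kmul_inf p : kmul p kinf = kinf.
Proof.
apply: val_inj => /=; rewrite /trunc; have := kval_ge0 p.
case: ifP => // h; lra.
Qed.

Lemma gen_mul p q : (tt p - ee) * (tt q - ee) = tt (kmul p q) - ee.
Proof.
have E : forall r, tt r * ee = ee by move=> r; rewrite /ee tM kmul_inf.
transitivity (tt p * tt q - tt p * ee - tt q * ee + ee * ee); first by ring.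
by rewrite !E tM; ring.
Qed.

Definition Sg (r : RR) : Prop := exists q : KT, 0 < kval q /\ r = tt q - ee.
Definition aa : RR -> Prop := ideal_gen Sg.

Lemma aa_ideal : is_ideal aa.
Proof. split; [exact: ig0|split; [exact: igD|exact: igM]]. Qed.

Lemma half_inK (q : KT) : inK (kval q / 2).
Proof.
case: q => v /= /andP[h0 /orP[h|/eqP->]]; rewrite /inK; apply/andP; split.
- lra.
- apply/orP; left; lra.
- lra.
- apply/orP; left; lra.
Qed.
Definition khalf (q : KT) : KT := @MkK _ (half_inK q).
Lemma khalfK q : kmul (khalf q) (khalf q) = q.
Proof.
apply: val_inj => /=; transitivity (trunc (kval q)); [congr trunc; lra|exact: trunc_id].
Qed.

Lemma aa_idem : idempotent_ideal aa.
Proof.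
move=> r; split; first exact: prod_in_ideal aa_ideal.
elim=> [|s [q [hq ->]]|s x _ hx|x y _ hx _ hy].
- exact: pi0.
- rewrite -{1}(khalfK q) -gen_mul; apply: piM.
    apply/(@pow1_iff _ aa _ aa_ideal); apply: igS; exists (khalf q); split => //=; lra.
  by apply: igS; exists (khalf q); split => //=; lra.
- apply: prod_mulr hx => s' i hi; apply: prod_mulr hi => ? ? _; exact: I.
- exact: piD.
Qed.

Lemma kiter_val q k : kval (iter k (kmul q) q) = trunc ((k.+1)%:R * kval q).
Proof.
elim: k => [|k IH] /=; first by rewrite mul1r trunc_id.
rewrite IH addrC trunc_addl ?kval_ge0 //; last by rewrite mulr_ge0 ?kval_ge0.
by congr trunc; rewrite [in RHS]mulrS mulrDl mul1r addrC.
Qed.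

Lemma gen_pow q k : (tt q - ee) ^+ k.+1 = tt (iter k (kmul q) q) - ee.
Proof. by elim: k => [|k IH]; rewrite ?expr1 // exprS IH gen_mul. Qed.

Lemma gen_nil q : 0 < kval q -> exists k, (tt q - ee) ^+ k = 0.
Proof.
move=> hq; set k := Num.Def.archi_bound (kval q)^-1.
have hb : (kval q)^-1 < k%:R by apply: archi_boundP; rewrite invr_ge0 ltW.
have h1 : 1 < k%:R * kval q.
  by rewrite -(ltr_pM2r hq) mulVf ?lt0r_neq0 in hb.
exists k.+1; rewrite gen_pow.
have -> : iter k (kmul q) q = kinf.
  clearbody k; apply: val_inj => /=; rewrite kiter_val /trunc ifF //.
  apply/negbTE; rewrite -ltNge -addn1 natrD mulrDl mul1r; lra.
by rewrite subrr.
Qed.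

Lemma aa_nil r : aa r -> exists k, r ^+ k = 0.
Proof.
elim=> [|s [q [hq ->]]|s x _ [k hk]|x y _ [m hm] _ [n hn]].
- by exists 1%N; rewrite expr1.
- exact: gen_nil.
- by exists k; rewrite exprMn hk mulr0.
- by exists (m + n)%N; apply: nil_add.
Qed.

Definition one1 : KT := @MkK 1 isT.

Lemma w_neq0 : tt one1 - ee != 0.
Proof.
apply/eqP => /(congr1 (mcoeff one1)); rewrite mcoeffB /tt /ee !mcoeffU1.
have -> : (kinf == one1) = false by apply/eqP => /(congr1 kval).
by rewrite mcoeff0 subr0 => /eqP; rewrite oner_eq0.
Qed.

Lemma a_kill r : aa r -> r * (tt one1 - ee) = 0.
Proof.
elim=> [|s [q [hq ->]]|s x _ hx|x y _ hx _ hy].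
- by rewrite mul0r.
- rewrite gen_mul.
  have -> : kmul q one1 = kinf.
    apply: val_inj => /=; rewrite /trunc ifF //; apply/negbTE; rewrite -ltNge; lra.
  by rewrite subrr.
- by rewrite -mulrA hx mulr0.
- by rewrite mulrDl hx hy addr0.
Qed.

Lemma pow_aa n r : aa r -> ideal_pow aa n r.
Proof.
case: n => [|n] h //.
by apply/(@pow_idem _ aa n.+1 r aa_ideal aa_idem isT).
Qed.

Theorem proposition7p5 :
  ((forall (R : comPzRingType) (a : R -> Prop),
      is_ideal a -> idempotent_ideal a ->
      forall M : lmodType R, bounded_small M a)
   /\ (exists (R : comPzRingType) (a : R -> Prop) (M : lmodType R),
         is_ideal a /\ idempotent_ideal a /\ ~ bounded_large M a)
   /\ (exists (R : comPzRingType) (a : R -> Prop),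
         is_ideal a /\ idempotent_ideal a /\ ~ strongly_bounded_small R^o a))
  /\
  (forall (R : comPzRingType) (a : R -> Prop),
      is_ideal a -> generated_by_idempotents a ->
      forall M : lmodType R, strongly_bounded_large M a).
Proof.
split; last exact: part_b.
split; first exact: part_a1.
have hw : aa (tt one1 - ee).
  by apply: igS; exists one1; split => //=; lra.
split.
- exists RRc, aa, RRc^o; split; first exact: aa_ideal.
  split; first exact: aa_idem.
  move=> [n hn].
  have := hn (tt one1 - ee) 1 (@pow_aa n _ hw).
  have H : Gamma_bar (M:=RRc^o) aa 1.
    move=> r hr; have [k hk] := @aa_nil _ hr; exists k.
    by rewrite /annih; change (r ^+ k * 1 = 0); rewrite mulr1.
  move=> /(_ H) h.
  have h' : (tt one1 - ee) * 1 = 0 := h.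
  by move: w_neq0; rewrite -[X in X != 0]mulr1 h' eqxx.
- exists RRc, aa; split; first exact: aa_ideal.
  split; first exact: aa_idem.
  move=> [n hn].
  have hz := @isZ RRc (RRc^o) (ideal_pow aa n) (tt one1 - ee) 1 (@pow_aa n _ hw).
  have E : (tt one1 - ee) *: (1 : RRc^o) = (tt one1 - ee : RRc^o).
    by change ((tt one1 - ee) * 1 = tt one1 - ee); rewrite mulr1.
  rewrite E in hz.
  move: w_neq0; rewrite (hn _ hz) ?eqxx //.
  exists 1%N => r hr; rewrite /annih.
  change (r * (tt one1 - ee) = 0); apply: a_kill.
  exact/(@pow1_iff _ aa r aa_ideal).
Qed.
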